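(* Consider the spherical mean curvature flow $M_t=M_{y(t)}$, $y(t)=e^{i\theta(t)}$, $\theta(0)=\theta_0$, of isoparametric hypersurfaces with $g$ distinct principal curvatures and multiplicity data $m_1\le m_2$, and let $\phi(t)=\|A(t)\|^2-\frac{1}{n}H^2(t)$. Then for all $t\le0$: (1) If $\delta=0$ (so $\theta_{\min}=\pi/(2g)$), then for every $0<\epsilon<1$ there is $c_0>0$ such that if $\theta_0\in(\frac{\pi}{2g}-c_0,\frac{\pi}{2g}+c_0)$ then $(g-1)n\le\phi(t)\le(g-1+\epsilon)n$. (2) If $\delta>0$ (so $g\in\{2,4\}$), then for every $0<\epsilon<1$ there is $c_0>0$ such that: (a) if $\theta_0\in(\theta_{\min}-c_0,\theta_{\min})$ then $(g-1-\epsilon)n\le\phi(t)\le(g-1)n$; (b) if $\theta_0\in(\theta_{\min},\theta_{\min}+c_0)$ then $(g-1)n\le\phi(t)\le(g-1+\epsilon)n$.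
   Context: Let $M^n$ be a compact isoparametric hypersurface in the unit sphere $S^{n+1}\subset\mathbb{R}^{n+2}$ (constant principal curvatures) with $g$ distinct principal curvatures; then $g\in\{1,2,3,4,6\}$. Fix $x_0\in M$ and identify the 2-dimensional normal space $\nu_{x_0}M$ of $M$ in $\mathbb{R}^{n+2}$ with $\mathbb{C}$ so that the two focal submanifolds $M_+$, $M_-$ ($\dim M_+\le\dim M_-$) meet the normal circle at $1$ and $e^{i\pi/g}$ (the intersection points closest to $x_0$). The Weyl chamber is $C=\{re^{i\theta}:r>0,\ 0<\theta<\pi/g\}$. For $k=1,\dots,g$ let $\theta_k=k\pi/g-\pi/2$, $\alpha_k=e^{i\theta_k}$, and $m_k=m_1$ for $k$ odd, $m_k=m_2$ for $k$ even, where $(m_1,m_2)$, $m_1\le m_2$, is the multiplicity data of the principal curvatures; $m_1=m_2$ if $g$ is odd, and $(m_1+m_2)g=2n$. For $x\in C$, $M_x=\{p+\tilde\xi(p):p\in M\}$ where $\tilde\xi$ is the parallel normal field on $M$ with $\tilde\xi(x_0)=x-x_0$; it is an $n$-dimensional isoparametric submanifold of $\mathbb{R}^{n+2}$ lying in $S^{n+1}(|x|)$, with normal space $\nu_{x_0}M$ at $x$, and $T_xM_x=\oplus_kE_k$, $\dim E_k=m_k$, with Euclidean shape operator $A_\xi|_{E_k}=\langle\xi,-\alpha_k/\langle x,\alpha_k\rangle\rangle\mathrm{Id}$ ($\langle\cdot,\cdot\rangle$ the real inner product on $\mathbb{C}=\mathbb{R}^2$). $H^E(x),A^E(x)$ denote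 mean curvature vector and shape operator of $M_x$ at $x$ in $\mathbb{R}^{n+2}$; $H^S(x),A^S(x)$ those of $M_x$ as a hypersurface of $S^{n+1}(|x|)$; $\|A\|^2$ is the sum of squared Hilbert–Schmidt norms over an orthonormal normal basis. Set $\delta=(m_2-m_1)/(m_2+m_1)$ if $g\ge2$ and $\delta=0$ if $g=1$, and let $\theta_{\min}\in(0,\pi/g)$ be defined by $\cos g\theta_{\min}=-\delta$. The spherical MCF of $M_{y(0)}$ is the family $M_t=M_{y(t)}$ with $y(t)\in C$ unit and $y'(t)=H^S(y(t))$; it exists for all $t\le0$; $A(t)=A^S(y(t))$ and $H^2(t)=\|H^S(y(t))\|^2$. *)

(* Defs.v *)
From Stdlib Require Import Reals Lra Arith.
Open Scope R_scope.

(* Vectors of R^2 = C, with the real inner product. *)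
Definition ip (u v : R * R) : R := fst u * fst v + snd u * snd v.
Definition nrm (u : R * R) : R := sqrt (ip u u).
Definition scal (a : R) (u : R * R) : R * R := (a * fst u, a * snd u).

Fixpoint sumk (f : nat -> R) (g : nat) : R :=
  match g with O => 0 | S p => sumk f p + f (S p) end.

Definition thk (g k : nat) : R := INR k * PI / INR g - PI / 2.
Definition alpha (g k : nat) : R * R := (cos (thk g k), sin (thk g k)).

Definition mult (m1 m2 k : nat) : nat := if Nat.odd k then m1 else m2.

Definition ndim (g m1 m2 : nat) : R := INR ((m1 + m2) * g) / 2.

(* eigenvalue of the Euclidean shape operator A_xi on E_k of M_x at x:
   < xi , - alpha_k / <x, alpha_k> > *)
Definition lamE (g : nat) (x xi : R * R) (k : nat) : R :=
  ip xi (scal (- / ip x (alpha g k)) (alpha g k)).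

(* unit normal of M_x inside the sphere S^{n+1}(|x|): the unit vector of the
   normal plane orthogonal to x (i x / |x|). *)
Definition sph_normal (x : R * R) : R * R := scal (/ nrm x) (- snd x, fst x).

(* trace of A^S(x) = A^E_xi restricted, xi the spherical unit normal *)
Definition trAS (g m1 m2 : nat) (x : R * R) : R :=
  sumk (fun k => INR (mult m1 m2 k) * lamE g x (sph_normal x) k) g.

Definition HS (g m1 m2 : nat) (x : R * R) : R * R :=
  scal (trAS g m1 m2 x) (sph_normal x).

Definition normAS2 (g m1 m2 : nat) (x : R * R) : R :=
  sumk (fun k => INR (mult m1 m2 k) * (lamE g x (sph_normal x) k) ^ 2) g.

Definition HS2 (g m1 m2 : nat) (x : R * R) : R := ip (HS g m1 m2 x) (HS g m1 m2 x).

Definition phi (g m1 m2 : nat) (x : R * R) : R :=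
  normAS2 g m1 m2 x - HS2 g m1 m2 x / ndim g m1 m2.

Definition delta (g m1 m2 : nat) : R :=
  if (2 <=? g)%nat then (INR m2 - INR m1) / (INR m2 + INR m1) else 0.

Definition isop_data (g m1 m2 : nat) : Prop :=
  (g = 1 \/ g = 2 \/ g = 3 \/ g = 4 \/ g = 6)%nat /\
  (1 <= m1)%nat /\ (m1 <= m2)%nat /\
  (Nat.odd g = true -> m1 = m2) /\
  (g = 6%nat -> m1 = m2).

Definition yof (th : R -> R) (t : R) : R * R := (cos (th t), sin (th t)).

(* th describes the spherical MCF y(t) = e^{i th(t)} for t <= 0:
   y(t) lies in the Weyl chamber and y'(t) = H^S(y(t)). *)
Definition is_sph_MCF (g m1 m2 : nat) (th : R -> R) : Prop :=
  forall t, t <= 0 ->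
    0 < th t < PI / INR g /\
    derivable_pt_lim (fun s => cos (th s)) t (fst (HS g m1 m2 (yof th t))) /\
    derivable_pt_lim (fun s => sin (th s)) t (snd (HS g m1 m2 (yof th t))).

(* Main.v *)
From Pilot Require Import Defs.
From Stdlib Require Import Reals Lra Nsatz Lia.
Open Scope R_scope.

Fixpoint cp (k:nat) (c s:R) : R*R := match k with O => (1,0) | S p => let q := cp p c s in (fst q*c - snd q*s, snd q*c + fst q*s) end.

Lemma cp_trig k x : cp k (cos x) (sin x) = (cos (INR k * x), sin (INR k * x)).
Proof.
  induction k as [|k IH].
  - simpl. rewrite Rmult_0_l, cos_0, sin_0. reflexivity.
  - simpl cp. rewrite IH. rewrite S_INR.
    replace ((INR k + 1) * x) with (INR k * x + x) by ring.
    rewrite cos_plus, sin_plus. f_equal; ring.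
Qed.

Lemma cosg k x : cos (INR k * x) = fst (cp k (cos x) (sin x)).
Proof. rewrite cp_trig. reflexivity. Qed.
Lemma sing k x : sin (INR k * x) = snd (cp k (cos x) (sin x)).
Proof. rewrite cp_trig. reflexivity. Qed.

Lemma nrm_unit x : nrm (cos x, sin x) = 1.
Proof. unfold nrm, ip; simpl. rewrite <- sqrt_1. f_equal. rewrite (Rplus_comm _ (sin x * sin x)).
  rewrite <- !Rsqr_def. apply sin2_cos2. Qed.

Definition lam (c s p q : R) : R := - ((-s)*p + c*q) / (c*p + s*q).

Lemma lamE_lam g x k : lamE g (cos x, sin x) (sph_normal (cos x, sin x)) k
  = lam (cos x) (sin x) (cos (thk g k)) (sin (thk g k)).
Proof. unfold lamE, sph_normal, lam, ip, scal, alpha. rewrite nrm_unit, Rinv_1. simpl.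
  unfold Rdiv. ring. Qed.

Lemma den_nz g k x : (1 <= k <= g)%nat -> 0 < x < PI / INR g ->
  cos x * cos (thk g k) + sin x * sin (thk g k) <> 0.
Proof.
  intros Hk Hx.
  assert (Hg : 0 < INR g) by (apply lt_0_INR; lia).
  assert (Hk1 : 1 <= INR k) by (apply (le_INR 1); lia).
  assert (Hkg : INR k <= INR g) by (apply le_INR; lia).
  rewrite <- cos_minus. unfold thk.
  replace (x - (INR k * PI / INR g - PI / 2)) with ((x - INR k * (PI / INR g)) + PI/2) by (field; lra).
  rewrite cos_plus, cos_PI2, sin_PI2.
  set (q := PI / INR g) in *.
  assert (Hq : INR g * q = PI) by (unfold q; field; lra).
  assert (0 < q) by lra.
  assert (sin (x - INR k * q) < 0).
  { apply sin_lt_0_var; nra. }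
  lra.
Qed.

Lemma thk_eq g k v : (0 < g)%nat -> INR k * PI / INR g - PI / 2 = v -> thk g k = v.
Proof. intros _ H. exact H. Qed.

Lemma cPI4 : cos (PI/4) = sqrt 2 * /2.
Proof. rewrite cos_PI4. assert (H := sqrt_sqrt 2 ltac:(lra)). assert (0 < sqrt 2) by (apply sqrt_lt_R0; lra). field_simplify_eq; lra. Qed.
Lemma sPI4 : sin (PI/4) = sqrt 2 * /2.
Proof. rewrite sin_PI4, <- cos_PI4. exact cPI4. Qed.

Lemma cPI6 : cos (PI/6) = sqrt 3 * /2. Proof. rewrite cos_PI6. reflexivity. Qed.
Lemma sPI6 : sin (PI/6) = /2. Proof. rewrite sin_PI6. field. Qed.
Lemma cPI3 : cos (PI/3) = /2. Proof. rewrite cos_PI3. field. Qed.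
Lemma sPI3 : sin (PI/3) = sqrt 3 * /2. Proof. rewrite sin_PI3. reflexivity. Qed.

Definition KEYCONCL g m1 m2 x :=
  trAS g m1 m2 (cos x, sin x) * sin (INR g*x) = -(ndim g m1 m2 * cos(INR g*x) + ndim g m1 m2 * delta g m1 m2) /\
  (ndim g m1 m2 * normAS2 g m1 m2 (cos x, sin x) - trAS g m1 m2 (cos x, sin x) * trAS g m1 m2 (cos x, sin x))
    * (sin(INR g*x) * sin(INR g*x)) =
  ndim g m1 m2 * ndim g m1 m2 * ((INR g - 1) + (INR g - 2)*delta g m1 m2 * cos(INR g*x) - delta g m1 m2 * delta g m1 m2).

Ltac abs_inv := repeat match goal with |- context [/ ?D] =>
  let w := fresh "w" in let Hw := fresh "Hw" in
  assert (Hw : / D * D = 1) by (apply Rinv_l; first [assumption | lra]);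
  set (w := / D) in *; clearbody w end.

Lemma cs1 x : cos x * cos x + sin x * sin x = 1.
Proof. rewrite (Rplus_comm _ (sin x * sin x)). rewrite <- !Rsqr_def. apply sin2_cos2. Qed.


Lemma fin_even (g a b d n P Q U V S C T A : R) : d*(b+a) = b-a -> n = (a+b)*(g/2) ->
  T = a*P + b*Q -> A = a*U + b*V ->
  P*S = -(g/2)*(C-1) -> Q*S = -(g/2)*(C+1) ->
  U*(S*S) = (g/2)*((g-2)*(1-C) + (C-1)*(C-1)) ->
  V*(S*S) = (g/2)*((g-2)*(1+C) + (C+1)*(C+1)) ->
  T * S = -(n*C + n*d) /\ (n*A - T*T)*(S*S) = n*n*((g-1)+(g-2)*d*C - d*d).
Proof. intros Hd Hn HT HA H1 H2 H3 H4. subst n T A. unfold Rdiv in *. split; nsatz. Qed.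

Lemma fin_odd (g a n L W S C T A d : R) : d = 0 -> n = a*g ->
  T = a*L -> A = a*W -> L*S = -g*C -> W*(S*S) = g*(g-1) + g*(C*C) ->
  T * S = -(n*C + n*d) /\ (n*A - T*T)*(S*S) = n*n*((g-1)+(g-2)*d*C - d*d).
Proof. intros Hd Hn HT HA H1 H2. subst. split; nsatz. Qed.

Ltac finish_lam x :=
  rewrite ?cos_neg, ?sin_neg, ?cPI4, ?sPI4, ?cPI6, ?sPI6, ?cPI3, ?sPI3, ?cos_0, ?sin_0, ?cos_PI2, ?sin_PI2 in *;
  rewrite cosg, sing;
  set (c := cos x) in *; set (s := sin x) in *;
  cbn [cp fst snd];
  unfold lam, Rdiv in *;
  abs_inv;
  clearbody c s.

Lemma lam4 x : 0 < x < PI/INR 4 ->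
  let l k := lam (cos x) (sin x) (cos (thk 4 k)) (sin (thk 4 k)) in
  let S := sin (INR 4 * x) in let C := cos (INR 4 * x) in
  (l 1%nat + l 3%nat)*S = -(INR 4/2)*(C-1) /\ (l 2%nat + l 4%nat)*S = -(INR 4/2)*(C+1) /\
  (l 1%nat * l 1%nat + l 3%nat * l 3%nat)*(S*S) = (INR 4/2)*((INR 4-2)*(1-C) + (C-1)*(C-1)) /\
  (l 2%nat * l 2%nat + l 4%nat * l 4%nat)*(S*S) = (INR 4/2)*((INR 4-2)*(1+C) + (C+1)*(C+1)).
Proof.
  intros Hx l S C. subst l S C. cbv beta.
  pose proof (den_nz 4 1 x ltac:(lia) Hx) as D1.
  pose proof (den_nz 4 2 x ltac:(lia) Hx) as D2.
  pose proof (den_nz 4 3 x ltac:(lia) Hx) as D3.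
  pose proof (den_nz 4 4 x ltac:(lia) Hx) as D4.
  pose proof (cs1 x) as Hcs.
  assert (Hr : sqrt 2 * sqrt 2 = 2) by (apply sqrt_sqrt; lra).
  rewrite (thk_eq 4 1 (-(PI/4))) in * by (lia || (simpl; field)).
  rewrite (thk_eq 4 2 0) in * by (lia || (simpl; field)).
  rewrite (thk_eq 4 3 (PI/4)) in * by (lia || (simpl; field)).
  rewrite (thk_eq 4 4 (PI/2)) in * by (lia || (simpl; field)).
  finish_lam x.
  replace (INR 4) with 4 by (simpl; ring).
  set (r := sqrt 2) in *. clearbody r.
  clear D1 D2 D3 D4 Hx.
  repeat split; nsatz.
Qed.

Lemma lam2 x : 0 < x < PI/INR 2 ->
  let l k := lam (cos x) (sin x) (cos (thk 2 k)) (sin (thk 2 k)) in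
  let S := sin (INR 2 * x) in let C := cos (INR 2 * x) in
  (l 1%nat)*S = -(INR 2/2)*(C-1) /\ (l 2%nat)*S = -(INR 2/2)*(C+1) /\
  (l 1%nat * l 1%nat)*(S*S) = (INR 2/2)*((INR 2-2)*(1-C) + (C-1)*(C-1)) /\
  (l 2%nat * l 2%nat)*(S*S) = (INR 2/2)*((INR 2-2)*(1+C) + (C+1)*(C+1)).
Proof.
  intros Hx l S C. subst l S C. cbv beta.
  pose proof (den_nz 2 1 x ltac:(lia) Hx) as D1.
  pose proof (den_nz 2 2 x ltac:(lia) Hx) as D2.
  pose proof (cs1 x) as Hcs.
  rewrite (thk_eq 2 1 0) in * by (lia || (simpl; field)).
  rewrite (thk_eq 2 2 (PI/2)) in * by (lia || (simpl; field)).
  finish_lam x.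
  replace (INR 2) with 2 by (simpl; ring).
  clear D1 D2 Hx.
  repeat split; nsatz.
Qed.

Lemma lam1 x : 0 < x < PI/INR 1 ->
  let l k := lam (cos x) (sin x) (cos (thk 1 k)) (sin (thk 1 k)) in
  let S := sin (INR 1 * x) in let C := cos (INR 1 * x) in
  (l 1%nat)*S = -INR 1*C /\
  (l 1%nat * l 1%nat)*(S*S) = INR 1*(INR 1-1) + INR 1*(C*C).
Proof.
  intros Hx l S C. subst l S C. cbv beta.
  pose proof (den_nz 1 1 x ltac:(lia) Hx) as D1.
  pose proof (cs1 x) as Hcs.
  rewrite (thk_eq 1 1 (PI/2)) in * by (lia || (simpl; field)).
  finish_lam x.
  replace (INR 1) with 1 by (simpl; ring).
  clear D1 Hx.
  repeat split; nsatz.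
Qed.

Lemma lam3 x : 0 < x < PI/INR 3 ->
  let l k := lam (cos x) (sin x) (cos (thk 3 k)) (sin (thk 3 k)) in
  let S := sin (INR 3 * x) in let C := cos (INR 3 * x) in
  (l 1%nat + l 2%nat + l 3%nat)*S = -INR 3*C /\
  (l 1%nat * l 1%nat + l 2%nat * l 2%nat + l 3%nat * l 3%nat)*(S*S) = INR 3*(INR 3-1) + INR 3*(C*C).
Proof.
  intros Hx l S C. subst l S C. cbv beta.
  pose proof (den_nz 3 1 x ltac:(lia) Hx) as D1.
  pose proof (den_nz 3 2 x ltac:(lia) Hx) as D2.
  pose proof (den_nz 3 3 x ltac:(lia) Hx) as D3.
  pose proof (cs1 x) as Hcs.
  assert (Hr : sqrt 3 * sqrt 3 = 3) by (apply sqrt_sqrt; lra).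
  rewrite (thk_eq 3 1 (-(PI/6))) in * by (lia || (simpl; field)).
  rewrite (thk_eq 3 2 (PI/6)) in * by (lia || (simpl; field)).
  rewrite (thk_eq 3 3 (PI/2)) in * by (lia || (simpl; field)).
  finish_lam x.
  replace (INR 3) with 3 by (simpl; ring).
  set (r := sqrt 3) in *. clearbody r.
  clear D1 D2 D3 Hx.
  repeat split; nsatz.
Qed.

Lemma lam6 x : 0 < x < PI/INR 6 ->
  let l k := lam (cos x) (sin x) (cos (thk 6 k)) (sin (thk 6 k)) in
  let S := sin (INR 6 * x) in let C := cos (INR 6 * x) in
  (l 1%nat + l 2%nat + l 3%nat + l 4%nat + l 5%nat + l 6%nat)*S = -INR 6*C /\
  (l 1%nat * l 1%nat + l 2%nat * l 2%nat + l 3%nat * l 3%nat + l 4%nat * l 4%nat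
   + l 5%nat * l 5%nat + l 6%nat * l 6%nat)*(S*S) = INR 6*(INR 6-1) + INR 6*(C*C).
Proof.
  intros Hx l S C. subst l S C. cbv beta.
  pose proof (den_nz 6 1 x ltac:(lia) Hx) as D1.
  pose proof (den_nz 6 2 x ltac:(lia) Hx) as D2.
  pose proof (den_nz 6 3 x ltac:(lia) Hx) as D3.
  pose proof (den_nz 6 4 x ltac:(lia) Hx) as D4.
  pose proof (den_nz 6 5 x ltac:(lia) Hx) as D5.
  pose proof (den_nz 6 6 x ltac:(lia) Hx) as D6.
  pose proof (cs1 x) as Hcs.
  assert (Hr : sqrt 3 * sqrt 3 = 3) by (apply sqrt_sqrt; lra).
  rewrite (thk_eq 6 1 (-(PI/3))) in * by (lia || (simpl; field)).
  rewrite (thk_eq 6 2 (-(PI/6))) in * by (lia || (simpl; field)).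
  rewrite (thk_eq 6 3 0) in * by (lia || (simpl; field)).
  rewrite (thk_eq 6 4 (PI/6)) in * by (lia || (simpl; field)).
  rewrite (thk_eq 6 5 (PI/3)) in * by (lia || (simpl; field)).
  rewrite (thk_eq 6 6 (PI/2)) in * by (lia || (simpl; field)).
  finish_lam x.
  replace (INR 6) with 6 by (simpl; ring).
  set (r := sqrt 3) in *. clearbody r.
  clear D1 D2 D3 D4 D5 D6 Hx.
  split. nsatz. nsatz.
Qed.

Lemma delta_eq g m1 m2 : (2 <= g)%nat -> (1 <= m1)%nat -> delta g m1 m2 * (INR m2 + INR m1) = INR m2 - INR m1.
Proof. intros Hg Hm. unfold delta. replace (2 <=? g)%nat with true by (symmetry; apply Nat.leb_le; lia).
  assert (1 <= INR m1) by (apply (le_INR 1); lia). assert (0 <= INR m2) by apply pos_INR. field. lra. Qed.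

Lemma ndim_eq g m1 m2 : ndim g m1 m2 = (INR m1 + INR m2) * (INR g / 2).
Proof. unfold ndim. rewrite mult_INR, plus_INR. field. Qed.

Lemma key4 m1 m2 x : isop_data 4 m1 m2 -> 0 < x < PI/INR 4 -> KEYCONCL 4 m1 m2 x.
Proof.
  intros Hd Hx. pose proof (lam4 x Hx) as F. cbv zeta in F. destruct F as [F1 [F2 [F3 F4]]].
  unfold KEYCONCL, trAS, normAS2. cbn [sumk]. cbv [Pilot.Defs.mult Nat.odd Nat.even negb]. rewrite !lamE_lam.
  refine (fin_even (INR 4) (INR m1) (INR m2) (delta 4 m1 m2) (ndim 4 m1 m2) _ _ _ _ _ _ _ _ _ _ _ _ F1 F2 F3 F4).
  - apply delta_eq; [lia | apply Hd].
  - apply ndim_eq.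
  - ring.
  - ring.
Qed.

Lemma key2 m1 m2 x : isop_data 2 m1 m2 -> 0 < x < PI/INR 2 -> KEYCONCL 2 m1 m2 x.
Proof.
  intros Hd Hx. pose proof (lam2 x Hx) as F. cbv zeta in F. destruct F as [F1 [F2 [F3 F4]]].
  unfold KEYCONCL, trAS, normAS2. cbn [sumk]. cbv [Pilot.Defs.mult Nat.odd Nat.even negb]. rewrite !lamE_lam.
  refine (fin_even (INR 2) (INR m1) (INR m2) (delta 2 m1 m2) (ndim 2 m1 m2) _ _ _ _ _ _ _ _ _ _ _ _ F1 F2 F3 F4).
  - apply delta_eq; [lia | apply Hd].
  - apply ndim_eq.
  - ring.
  - ring.
Qed.

Lemma delta_same g m : delta g m m = 0.
Proof. unfold delta. destruct (2 <=? g)%nat; [unfold Rdiv; ring | reflexivity]. Qed.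

Lemma ndim_same g m : ndim g m m = INR m * INR g.
Proof. rewrite ndim_eq. field. Qed.

Lemma odd_same g m1 m2 : isop_data g m1 m2 -> (g = 1 \/ g = 3 \/ g = 6)%nat -> m2 = m1.
Proof. intros [_ [_ [_ [Ho H6]]]] Hg. destruct Hg as [-> | [-> | ->]].
  - symmetry; apply Ho; reflexivity. - symmetry; apply Ho; reflexivity. - symmetry; apply H6; reflexivity. Qed.

Lemma key1 m1 m2 x : isop_data 1 m1 m2 -> 0 < x < PI/INR 1 -> KEYCONCL 1 m1 m2 x.
Proof.
  intros Hd Hx. assert (m2 = m1) by (eapply odd_same; eauto). subst m2.
  pose proof (lam1 x Hx) as F. cbv zeta in F. destruct F as [F1 F2].
  unfold KEYCONCL, trAS, normAS2. cbn [sumk]. cbv [Pilot.Defs.mult Nat.odd Nat.even negb]. rewrite !lamE_lam.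
  refine (fin_odd (INR 1) (INR m1) (ndim 1 m1 m1) _ _ _ _ _ _ (delta 1 m1 m1) _ _ _ _ F1 F2).
  - apply delta_same.
  - apply ndim_same.
  - ring.
  - ring.
Qed.

Lemma key3 m1 m2 x : isop_data 3 m1 m2 -> 0 < x < PI/INR 3 -> KEYCONCL 3 m1 m2 x.
Proof.
  intros Hd Hx. assert (m2 = m1) by (eapply odd_same; eauto). subst m2.
  pose proof (lam3 x Hx) as F. cbv zeta in F. destruct F as [F1 F2].
  unfold KEYCONCL, trAS, normAS2. cbn [sumk]. cbv [Pilot.Defs.mult Nat.odd Nat.even negb]. rewrite !lamE_lam.
  refine (fin_odd (INR 3) (INR m1) (ndim 3 m1 m1) _ _ _ _ _ _ (delta 3 m1 m1) _ _ _ _ F1 F2).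
  - apply delta_same.
  - apply ndim_same.
  - ring.
  - ring.
Qed.

Lemma key6 m1 m2 x : isop_data 6 m1 m2 -> 0 < x < PI/INR 6 -> KEYCONCL 6 m1 m2 x.
Proof.
  intros Hd Hx. assert (m2 = m1) by (eapply odd_same; eauto). subst m2.
  pose proof (lam6 x Hx) as F. cbv zeta in F. destruct F as [F1 F2].
  unfold KEYCONCL, trAS, normAS2. cbn [sumk]. cbv [Pilot.Defs.mult Nat.odd Nat.even negb]. rewrite !lamE_lam.
  refine (fin_odd (INR 6) (INR m1) (ndim 6 m1 m1) _ _ _ _ _ _ (delta 6 m1 m1) _ _ _ _ F1 F2).
  - apply delta_same.
  - apply ndim_same.
  - ring.
  - ring.
Qed.

Lemma key g m1 m2 x : isop_data g m1 m2 -> 0 < x < PI/INR g -> KEYCONCL g m1 m2 x.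
Proof.
  intros Hd. destruct (proj1 Hd) as [-> | [-> | [-> | [-> | ->]]]].
  - apply key1; auto. - apply key2; auto. - apply key3; auto. - apply key4; auto. - apply key6; auto.
Qed.

Lemma dlim_eq f x l l' : l = l' -> derivable_pt_lim f x l -> derivable_pt_lim f x l'.
Proof. intros ->; auto. Qed.

Lemma dcp k (f1 f2 : R -> R) t T : derivable_pt_lim f1 t (-(T * f2 t)) -> derivable_pt_lim f2 t (T * f1 t) ->
  derivable_pt_lim (fun s => fst (cp k (f1 s) (f2 s))) t (-(INR k) * snd (cp k (f1 t) (f2 t)) * T) /\
  derivable_pt_lim (fun s => snd (cp k (f1 s) (f2 s))) t (INR k * fst (cp k (f1 t) (f2 t)) * T).
Proof.
  intros H1 H2. induction k as [|k [IH1 IH2]].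
  - simpl. split; (eapply dlim_eq; [| apply derivable_pt_lim_const]; simpl; try ring).
  - cbn [cp fst snd]. rewrite S_INR. split.
    + pose proof (derivable_pt_lim_minus _ _ _ _ _ (derivable_pt_lim_mult _ _ _ _ _ IH1 H1) (derivable_pt_lim_mult _ _ _ _ _ IH2 H2)) as H.
      eapply dlim_eq; [| exact H]. cbv beta. ring.
    + pose proof (derivable_pt_lim_plus _ _ _ _ _ (derivable_pt_lim_mult _ _ _ _ _ IH2 H1) (derivable_pt_lim_mult _ _ _ _ _ IH1 H2)) as H.
      eapply dlim_eq; [| exact H]. cbv beta. ring.
Qed.

Lemma HS_fst g m1 m2 y : fst (HS g m1 m2 (cos y, sin y)) = -(trAS g m1 m2 (cos y, sin y) * sin y).
Proof. unfold HS, scal, sph_normal. cbn [fst snd]. rewrite nrm_unit, Rinv_1. unfold scal; cbn [fst snd]. ring. Qed.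
Lemma HS_snd g m1 m2 y : snd (HS g m1 m2 (cos y, sin y)) = trAS g m1 m2 (cos y, sin y) * cos y.
Proof. unfold HS, scal, sph_normal. cbn [fst snd]. rewrite nrm_unit, Rinv_1. unfold scal; cbn [fst snd]. ring. Qed.

Lemma flow g m1 m2 th : isop_data g m1 m2 -> is_sph_MCF g m1 m2 th -> forall t, t <= 0 ->
  cos (INR g * th t) + delta g m1 m2 = (cos (INR g * th 0) + delta g m1 m2) * exp (INR g * ndim g m1 m2 * t).
Proof.
  intros Hd Hm.
  set (d := delta g m1 m2). set (K := INR g * ndim g m1 m2).
  set (u := fun s => fst (cp g (cos (th s)) (sin (th s))) + d).
  assert (Du : forall s, s <= 0 -> derivable_pt_lim u s (K * u s)).
  { intros s Hs. destruct (Hm s Hs) as [Hth [Dc Ds]].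
    unfold yof in Dc, Ds. rewrite HS_fst in Dc. rewrite HS_snd in Ds.
    destruct (dcp g (fun s => cos (th s)) (fun s => sin (th s)) s _ Dc Ds) as [D1 _].
    pose proof (derivable_pt_lim_plus _ _ _ _ _ D1 (derivable_pt_lim_const d s)) as H.
    eapply dlim_eq; [| exact H].
    destruct (key g m1 m2 (th s) Hd Hth) as [E _].
    rewrite cosg, sing in E. unfold u, K. fold d in E.
    set (TT := trAS g m1 m2 (cos (th s), sin (th s))) in *.
    set (SS := snd (cp g (cos (th s)) (sin (th s)))) in *.
    set (CC := fst (cp g (cos (th s)) (sin (th s)))) in *.
    replace (- INR g * SS * TT + 0) with (- INR g * (TT * SS)) by ring. rewrite E. ring. }
  set (w := fun s => u s * exp (- K * s)).
  assert (Dw : forall s, s <= 0 -> derivable_pt_lim w s 0).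
  { intros s Hs.
    assert (De : derivable_pt_lim (fun s => exp (- K * s)) s (exp (-K*s) * (-K))).
    { apply (derivable_pt_lim_comp (fun s => -K*s) exp s (-K) (exp (-K*s))).
      - eapply dlim_eq; [| apply (derivable_pt_lim_scal id (-K) s 1 (derivable_pt_lim_id s))]. ring.
      - apply derivable_pt_lim_exp. }
    pose proof (derivable_pt_lim_mult _ _ _ _ _ (Du s Hs) De) as H.
    eapply dlim_eq; [| exact H]. change ((fun s0 : R => exp (- K * s0)) s) with (exp (- K * s)). ring. }
  intros t Ht.
  assert (Hw : w t = w 0).
  { destruct (Req_dec t 0) as [-> | Hne]; [reflexivity |].
    destruct (MVT_cor2 w (fun _ => 0) t 0 ltac:(lra)) as [c [Hc _]].
    - intros c Hc. apply Dw. lra.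
    - lra. }
  unfold w, u in Hw. rewrite <- !cosg in Hw. rewrite Rmult_0_r, exp_0, Rmult_1_r in Hw.
  rewrite <- Hw. rewrite Rmult_assoc, <- exp_plus. replace (-K*t + K*t) with 0 by ring.
  rewrite exp_0. ring.
Qed.

Lemma HS2_eq g m1 m2 x : HS2 g m1 m2 (cos x, sin x) = trAS g m1 m2 (cos x, sin x) * trAS g m1 m2 (cos x, sin x).
Proof. unfold HS2, HS, ip, scal, sph_normal. cbn [fst snd]. rewrite nrm_unit, Rinv_1. cbn [fst snd].
  transitivity (trAS g m1 m2 (cos x, sin x) * trAS g m1 m2 (cos x, sin x) * (cos x * cos x + sin x * sin x)).
  - unfold scal; cbn [fst snd]. ring.
  - rewrite cs1. ring. Qed.

Lemma gbounds g m1 m2 : isop_data g m1 m2 -> 1 <= INR g <= 6.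
Proof. intros [Hg _]. destruct Hg as [-> | [-> | [-> | [-> | ->]]]]; simpl; lra. Qed.

Lemma ndim_pos g m1 m2 : isop_data g m1 m2 -> 0 < ndim g m1 m2.
Proof. intros Hd. pose proof (gbounds _ _ _ Hd). rewrite ndim_eq.
  destruct Hd as [_ [H1 _]]. assert (1 <= INR m1) by (apply (le_INR 1); lia).
  pose proof (pos_INR m2). nra. Qed.

Lemma phiS g m1 m2 x : isop_data g m1 m2 -> 0 < x < PI/INR g ->
  phi g m1 m2 (cos x, sin x) * (sin (INR g*x) * sin (INR g*x)) =
  ndim g m1 m2 * ((INR g - 1) + (INR g - 2)*delta g m1 m2 * cos(INR g*x) - delta g m1 m2 * delta g m1 m2).
Proof.
  intros Hd Hx. destruct (key g m1 m2 x Hd Hx) as [_ E].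
  pose proof (ndim_pos _ _ _ Hd) as Hn.
  unfold phi. rewrite HS2_eq.
  apply (Rmult_eq_reg_l (ndim g m1 m2)); [| lra].
  rewrite Rmult_assoc, (Rmult_comm (ndim g m1 m2)), <- Rmult_assoc.
  transitivity ((ndim g m1 m2 * normAS2 g m1 m2 (cos x, sin x) -
     trAS g m1 m2 (cos x, sin x) * trAS g m1 m2 (cos x, sin x)) * (sin (INR g * x) * sin (INR g * x))).
  - field. lra.
  - rewrite E. ring.
Qed.

Lemma cos_lip a b : Rabs (cos a - cos b) <= Rabs (a - b).
Proof.
  assert (H : forall a b, a < b -> Rabs (cos a - cos b) <= Rabs (a - b)).
  { intros p q Hpq.
    destruct (MVT_cor2 cos (fun y => - sin y) p q Hpq) as [c [Hc _]].
    - intros c _. apply derivable_pt_lim_cos.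
    - rewrite <- Rabs_Ropp. replace (- (cos p - cos q)) with (cos q - cos p) by ring.
      rewrite Hc, Rabs_mult. rewrite (Rabs_minus_sym p q).
      pose proof (SIN_bound c). assert (Rabs (- sin c) <= 1) by (apply Rabs_le; lra).
      pose proof (Rabs_pos (q - p)). nra. }
  destruct (Rtotal_order a b) as [Hab | [-> | Hab]].
  - apply H; auto.
  - rewrite !Rminus_diag, Rabs_R0. lra.
  - rewrite Rabs_minus_sym, (Rabs_minus_sym a b). apply H; auto.
Qed.

Lemma exp_bounds K t : 0 <= K -> t <= 0 -> 0 < exp (K*t) <= 1.
Proof. intros HK Ht. split; [apply exp_pos|]. rewrite <- exp_0.
  destruct (Req_dec (K*t) 0) as [-> | Hne]; [lra|]. left. apply exp_increasing. nra. Qed.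

Lemma sin_pos_g g x : 1 <= INR g -> 0 < x < PI/INR g -> 0 < sin (INR g * x).
Proof. intros Hg Hx. apply sin_gt_0.
  - nra.
  - assert (INR g * (PI/INR g) = PI) by (field; lra). nra. Qed.
Lemma div_le_lemma a b S : 0 < S -> a * S <= b * S -> a <= b.
Proof. intros HS H. apply (Rmult_le_reg_r S); auto. Qed.

Lemma case1 G n C C0 E P eps : 1 <= G <= 6 -> 0 < n -> 0 < eps < 1 -> C = C0*E -> 0 < E <= 1 ->
  C0*C0 <= eps/6 -> 0 < 1 - C*C -> P*(1-C*C) = n*((G-1)+(G-2)*0*C - 0*0) ->
  (G-1)*n <= P <= (G-1+eps)*n.
Proof.
  intros HG Hn He HC HE H0 HS HP.
  assert (HCC : C*C <= C0*C0).
  { subst C. assert (E*E <= 1) by nra. assert (0 <= C0*C0) by nra. nra. }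
  split; apply (div_le_lemma _ _ (1 - C*C) HS); rewrite HP.
  - assert (0 <= C*C) by nra.
    assert (Hx: n*((G-1)+(G-2)*0*C - 0*0) - (G-1)*n*(1-C*C) = ((G-1)*(C*C))*n) by ring.
    assert (0 <= ((G-1)*(C*C))*n) by (apply Rmult_le_pos; nra). lra.
  - assert (0 <= C*C) by nra.
    assert ((G-1+eps)*(C*C) <= eps) by nra.
    assert (Hx: (G-1+eps)*n*(1-C*C) - n*((G-1)+(G-2)*0*C - 0*0) = (eps - (G-1+eps)*(C*C))*n) by ring.
    assert (0 <= (eps - (G-1+eps)*(C*C))*n) by (apply Rmult_le_pos; lra). lra.
Qed.

Lemma case2a G n d u0 E C P eps eta : 1 <= G <= 6 -> 0 < n -> 0 < d < 1 -> 0 < eps < 1 ->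
  eta <= d -> eta <= eps*((1-d)*(3+d)/4)/11 -> 0 < u0 < eta -> 0 < E <= 1 -> C + d = u0*E ->
  0 < 1 - C*C -> P*(1-C*C) = n*((G-1)+(G-2)*d*C - d*d) ->
  (G-1-eps)*n <= P <= (G-1)*n.
Proof.
  intros HG Hn Hd He H1 H2 Hu HE HC HS HP.
  set (u := u0*E) in *.
  assert (Hu' : 0 < u < eta) by (unfold u; nra).
  assert (Cd : C = u - d) by lra.
  split; apply (div_le_lemma _ _ (1 - C*C) HS); rewrite HP.
  - assert (u - 2*d < 0) by lra.
    assert (u*(u-2*d) <= 0) by nra.
    assert (Hq : 1 - d*d <= 1 - C*C) by (subst C; nra).
    assert (HK : (1-d)*(3+d)/4 <= 1 - d*d) by nra.
    assert (Hgd : u*G*d <= eps*(1-C*C)) by nra.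
    assert (Hid : n*((G-1)+(G-2)*d*C - d*d) - (G-1-eps)*n*(1-C*C) = n*(u*((G-1)*u - G*d) + eps*(1-C*C))) by (subst C; ring).
    assert (0 <= (G-1)*(u*u)) by (apply Rmult_le_pos; nra).
    assert (u*((G-1)*u - G*d) = (G-1)*(u*u) - u*G*d) by ring.
    assert (0 <= u*((G-1)*u - G*d) + eps*(1-C*C)) by lra.
    assert (0 <= n*(u*((G-1)*u - G*d) + eps*(1-C*C))) by (apply Rmult_le_pos; lra).
    lra.
  - assert (Hid : (G-1)*n*(1-C*C) - n*((G-1)+(G-2)*d*C - d*d) = - n*(u*((G-1)*u - G*d))) by (subst C; ring).
    assert ((G-1)*u - G*d < 0) by nra.
    assert (u*((G-1)*u - G*d) <= 0) by nra.
    assert (0 <= n*(-(u*((G-1)*u - G*d)))) by (apply Rmult_le_pos; lra).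
    lra.
Qed.

Lemma case2b G n d u0 E C P eps eta : 1 <= G <= 6 -> 0 < n -> 0 < d < 1 -> 0 < eps < 1 ->
  0 < eta -> eta <= (1-d)/2 -> eta <= eps*((1-d)*(3+d)/4)/11 -> -eta < u0 < 0 -> 0 < E <= 1 -> C + d = u0*E ->
  0 < 1 - C*C -> P*(1-C*C) = n*((G-1)+(G-2)*d*C - d*d) ->
  (G-1)*n <= P <= (G-1+eps)*n.
Proof.
  intros HG Hn Hd He H0 H1 H2 Hu HE HC HS HP.
  set (u := u0*E) in *.
  assert (Hu' : -eta < u < 0) by (unfold u; nra).
  assert (Cd : C = u - d) by lra.
  split; apply (div_le_lemma _ _ (1 - C*C) HS); rewrite HP.
  - assert (Hid : n*((G-1)+(G-2)*d*C - d*d) - (G-1)*n*(1-C*C) = n*(u*((G-1)*u - G*d))) by (subst C; ring).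
    assert ((G-1)*u - G*d < 0) by nra.
    assert (0 <= u*((G-1)*u - G*d)) by nra.
    assert (0 <= n*(u*((G-1)*u - G*d))) by (apply Rmult_le_pos; lra).
    lra.
  - assert (Hc1 : -((1+d)/2) <= C <= 0) by lra.
    assert (HCC : C*C <= ((1+d)/2)*((1+d)/2)) by nra.
    assert (Hq : (1-d)*(3+d)/4 <= 1 - C*C) by nra.
    assert (u*u <= eta*eta) by nra.
    assert (eta*eta <= eta) by nra.
    assert (0 <= (G-1)*(u*u) <= 5*eta) by (split; [apply Rmult_le_pos|]; nra).
    assert (0 <= -u*(G*d) <= 6*eta) by (split; [apply Rmult_le_pos|]; nra).
    assert (Hb : u*((G-1)*u - G*d) <= 11*eta) by nra.
    assert (Hid : (G-1+eps)*n*(1-C*C) - n*((G-1)+(G-2)*d*C - d*d) = n*(eps*(1-C*C) - u*((G-1)*u - G*d))) by (subst C; ring).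
    assert (eps*((1-d)*(3+d)/4) <= eps*(1-C*C)) by (apply Rmult_le_compat_l; lra).
    assert (0 <= eps*(1-C*C) - u*((G-1)*u - G*d)) by lra.
    assert (0 <= n*(eps*(1-C*C) - u*((G-1)*u - G*d))) by (apply Rmult_le_pos; lra).
    lra.
Qed.

Lemma delta_bounds g m1 m2 : isop_data g m1 m2 -> 0 <= delta g m1 m2 < 1.
Proof. intros Hd. destruct Hd as [_ [H1 [H2 _]]]. unfold delta.
  assert (1 <= INR m1) by (apply (le_INR 1); lia). assert (INR m1 <= INR m2) by (apply le_INR; lia).
  destruct (2 <=? g)%nat; [|lra].
  split; [apply Rmult_le_pos; [lra | left; apply Rinv_0_lt_compat; lra] |].
  apply (Rmult_lt_reg_r (INR m2 + INR m1)); [lra|]. unfold Rdiv. rewrite Rmult_assoc, Rinv_l; lra. Qed.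

Lemma core g m1 m2 th t : isop_data g m1 m2 -> is_sph_MCF g m1 m2 th -> t <= 0 ->
  exists E, 0 < E <= 1 /\ cos (INR g * th t) + delta g m1 m2 = (cos (INR g * th 0) + delta g m1 m2) * E /\
  0 < 1 - cos (INR g * th t) * cos (INR g * th t) /\
  phi g m1 m2 (yof th t) * (1 - cos (INR g * th t) * cos (INR g * th t)) =
  ndim g m1 m2 * ((INR g - 1) + (INR g - 2)*delta g m1 m2 * cos (INR g * th t) - delta g m1 m2 * delta g m1 m2).
Proof.
  intros Hd Hm Ht.
  pose proof (gbounds _ _ _ Hd) as HG. pose proof (ndim_pos _ _ _ Hd) as Hn.
  exists (exp (INR g * ndim g m1 m2 * t)).
  destruct (Hm t Ht) as [Hx _].
  assert (HS : 1 - cos (INR g * th t) * cos (INR g * th t) = sin (INR g * th t) * sin (INR g * th t)).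
  { pose proof (cs1 (INR g * th t)). lra. }
  pose proof (sin_pos_g g (th t) (proj1 HG) Hx) as Hsp.
  split; [apply exp_bounds; [nra | lra] |].
  split; [apply flow; auto |].
  rewrite HS. split; [nra |].
  unfold yof. apply phiS; auto.
Qed.

Theorem proposition4p17 :
  forall (g m1 m2 : nat) (thmin : R),
    isop_data g m1 m2 ->
    0 < thmin < PI / INR g ->
    cos (INR g * thmin) = - delta g m1 m2 ->
    (delta g m1 m2 = 0 ->
      forall eps, 0 < eps < 1 ->
      exists c0, 0 < c0 /\
        forall th : R -> R, is_sph_MCF g m1 m2 th ->
          PI / (2 * INR g) - c0 < th 0 < PI / (2 * INR g) + c0 ->
          forall t, t <= 0 ->
            (INR g - 1) * ndim g m1 m2 <= phi g m1 m2 (yof th t) <=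
            (INR g - 1 + eps) * ndim g m1 m2)
    /\
    (delta g m1 m2 > 0 ->
      forall eps, 0 < eps < 1 ->
      exists c0, 0 < c0 /\
        (forall th : R -> R, is_sph_MCF g m1 m2 th ->
          thmin - c0 < th 0 < thmin ->
          forall t, t <= 0 ->
            (INR g - 1 - eps) * ndim g m1 m2 <= phi g m1 m2 (yof th t) <=
            (INR g - 1) * ndim g m1 m2) /\
        (forall th : R -> R, is_sph_MCF g m1 m2 th ->
          thmin < th 0 < thmin + c0 ->
          forall t, t <= 0 ->
            (INR g - 1) * ndim g m1 m2 <= phi g m1 m2 (yof th t) <=
            (INR g - 1 + eps) * ndim g m1 m2)).
Proof.
  intros g m1 m2 thmin Hd Hmin Hcos.
  pose proof (gbounds _ _ _ Hd) as HG. pose proof (ndim_pos _ _ _ Hd) as Hn.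
  pose proof (delta_bounds _ _ _ Hd) as Hdb.
  assert (HgPI : INR g * (PI / INR g) = PI) by (field; lra).
  split.
  - intros Hd0 eps Heps. exists (eps/36). split; [lra|].
    intros th Hm H0 t Ht.
    destruct (core g m1 m2 th t Hd Hm Ht) as [E [HE [HC [HS HP]]]].
    rewrite Hd0 in HC, HP. rewrite !Rplus_0_r in HC.
    apply (case1 (INR g) (ndim g m1 m2) (cos (INR g * th t)) (cos (INR g * th 0)) E _ eps); auto.
    assert (Hl := cos_lip (INR g * th 0) (PI/2)). rewrite cos_PI2, Rminus_0_r in Hl.
    assert (Hq : INR g * th 0 - PI/2 = INR g * (th 0 - PI / (2 * INR g))) by (field; lra).
    rewrite Hq, Rabs_mult, (Rabs_right (INR g)) in Hl by lra.
    assert (Rabs (th 0 - PI / (2 * INR g)) < eps/36) by (apply Rabs_def1; lra).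
    assert (Habs : Rabs (cos (INR g * th 0)) <= eps/6).
    { assert (0 <= Rabs (th 0 - PI / (2 * INR g))) by apply Rabs_pos. nra. }
    assert (HC0 : cos (INR g * th 0) * cos (INR g * th 0) = Rabs (cos (INR g * th 0)) * Rabs (cos (INR g * th 0))).
    { rewrite <- Rabs_mult. rewrite Rabs_right; [reflexivity|]. apply Rle_ge. nra. }
    rewrite HC0. pose proof (Rabs_pos (cos (INR g * th 0))). nra.
  - intros Hdpos eps Heps.
    set (d := delta g m1 m2) in *.
    set (K1 := (1-d)*(3+d)/4).
    assert (HK1 : 0 < K1) by (unfold K1; nra).
    set (eta := Rmin d (Rmin ((1-d)/2) (eps*K1/11))).
    assert (Heta1 : eta <= d) by apply Rmin_l.
    assert (Heta2 : eta <= (1-d)/2) by (eapply Rle_trans; [apply Rmin_r | apply Rmin_l]).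
    assert (Heta3 : eta <= eps*K1/11) by (eapply Rle_trans; [apply Rmin_r | apply Rmin_r]).
    assert (Heta0 : 0 < eta).
    { unfold eta. apply Rmin_pos; [lra | apply Rmin_pos; [lra|]]. apply Rmult_lt_0_compat; [nra | lra]. }
    exists (eta/6). split; [lra|]. split.
    + intros th Hm H0 t Ht.
      destruct (core g m1 m2 th t Hd Hm Ht) as [E [HE [HC [HS HP]]]].
      destruct (Hm 0 ltac:(lra)) as [Hx0 _].
      set (u0 := cos (INR g * th 0) + d).
      assert (Hu0e : u0 = cos (INR g * th 0) - cos (INR g * thmin)) by (unfold u0; rewrite Hcos; ring).
      assert (Hlt : cos (INR g * thmin) < cos (INR g * th 0)).
      { apply cos_decreasing_1; nra. }
      assert (Hl := cos_lip (INR g * th 0) (INR g * thmin)).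
      rewrite <- Hu0e in Hl. rewrite Rabs_right in Hl by lra.
      rewrite Rabs_left in Hl by nra.
      apply (case2a (INR g) (ndim g m1 m2) d u0 E (cos (INR g * th t)) _ eps eta); auto; try lra.
      assert (INR g * (thmin - th 0) <= 6*(thmin - th 0)) by nra.
      split; lra.
    + intros th Hm H0 t Ht.
      destruct (core g m1 m2 th t Hd Hm Ht) as [E [HE [HC [HS HP]]]].
      destruct (Hm 0 ltac:(lra)) as [Hx0 _].
      set (u0 := cos (INR g * th 0) + d).
      assert (Hu0e : u0 = cos (INR g * th 0) - cos (INR g * thmin)) by (unfold u0; rewrite Hcos; ring).
      assert (Hlt : cos (INR g * th 0) < cos (INR g * thmin)).
      { apply cos_decreasing_1; nra. }
      assert (Hl := cos_lip (INR g * th 0) (INR g * thmin)).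
      rewrite <- Hu0e in Hl. rewrite Rabs_left in Hl by lra.
      rewrite Rabs_right in Hl by nra.
      apply (case2b (INR g) (ndim g m1 m2) d u0 E (cos (INR g * th t)) _ eps eta); auto; try lra.
      assert (INR g * (th 0 - thmin) <= 6*(th 0 - thmin)) by nra.
      split; lra.
Qed.
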